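(* Let $G$ be a group and let $\mathcal{F}$ be a collection of pairwise commensurable subgroups of $G$. Then $\mathcal{F}$ is a metric space under the function $d(H,K) := \log(c(H,K))$.
   Context: For subgroups $H,K$ of $G$, $c(H,K) = [H:H\cap K][K:H\cap K]$; $H$ and $K$ are commensurable if $c(H,K)<\infty$. *)

(* Defs.v *)
From Stdlib Require Import Reals ClassicalEpsilon.
Open Scope R_scope.

Record group := Group {
  carrier :> Type;
  mul : carrier -> carrier -> carrier;
  one : carrier;
  inv : carrier -> carrier;
  mulA : forall x y z, mul x (mul y z) = mul (mul x y) z;
  mul1g : forall x, mul one x = x;
  mulVg : forall x, mul (inv x) x = one
}.

Arguments mul {g}.
Arguments one {g}.
Arguments inv {g}.

Definition is_subgroup {G : group} (H : G -> Prop) : Prop :=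
  H one /\ (forall x y, H x -> H y -> H (mul x y)) /\ (forall x, H x -> H (inv x)).

Definition setI {G : group} (H K : G -> Prop) : G -> Prop := fun x => H x /\ K x.

(* [is_index H L n]: H has exactly n left cosets of L, i.e. there are
   n elements f 0, ..., f (n-1) of H lying in pairwise distinct cosets
   x L, and every element of H lies in one of these cosets. *)
Definition is_index {G : group} (H L : G -> Prop) (n : nat) : Prop :=
  exists f : nat -> G,
    (forall i, (i < n)%nat -> H (f i)) /\
    (forall i j, (i < n)%nat -> (j < n)%nat -> L (mul (inv (f i)) (f j)) -> i = j) /\
    (forall h, H h -> exists i, (i < n)%nat /\ L (mul (inv (f i)) h)).

(* The index [H : L] (meaningful when it is finite; junk value otherwise). *)
Definition index {G : group} (H L : G -> Prop) : nat :=
  epsilon (inhabits 0%nat) (fun n => is_index H L n).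

Definition finite_index {G : group} (H L : G -> Prop) : Prop :=
  exists n, is_index H L n.

Definition c {G : group} (H K : G -> Prop) : nat :=
  (index H (setI H K) * index K (setI H K))%nat.

(* H and K are commensurable iff c(H,K) < ∞, i.e. both indices are finite. *)
Definition commensurable {G : group} (H K : G -> Prop) : Prop :=
  finite_index H (setI H K) /\ finite_index K (setI H K).

Definition d {G : group} (H K : G -> Prop) : R := ln (INR (c H K)).

Definition metric_on {T : Type} (X : T -> Prop) (dist : T -> T -> R) : Prop :=
  (forall x y, X x -> X y -> 0 <= dist x y) /\
  (forall x y, X x -> X y -> (dist x y = 0 <-> x = y)) /\
  (forall x y, X x -> X y -> dist x y = dist y x) /\
  (forall x y z, X x -> X y -> X z -> dist x z <= dist x y + dist y z).

(* Main.v *)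
Require Import Defs.
From Stdlib Require Import Reals Lia Lra Arith ClassicalEpsilon FunctionalExtensionality PropExtensionality.
Open Scope R_scope.

Lemma php (n m : nat) (R : nat -> nat -> Prop) :
  (forall t, (t < n)%nat -> exists p, (p < m)%nat /\ R t p) ->
  (forall t t' p, (t < n)%nat -> (t' < n)%nat -> R t p -> R t' p -> t = t') ->
  (n <= m)%nat.
Proof.
  revert m R; induction n as [|n IH]; intros m R Htot Hinj; [lia|].
  destruct (Htot n ltac:(lia)) as [p0 [Hp0 Rp0]].
  set (h := fun q => if Nat.ltb q p0 then q else S q).
  assert (n <= m - 1)%nat.
  { apply (IH (m-1)%nat (fun t q => R t (h q))).
    - intros t Ht. destruct (Htot t ltac:(lia)) as [p [Hp Rp]].
      assert (p <> p0) as Hne.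
      { intro E; subst p. assert (t = n) by (apply (Hinj t n p0); auto; lia). lia. }
      destruct (Nat.ltb_spec p p0).
      + exists p. split; [lia|]. unfold h. destruct (Nat.ltb_spec p p0); [auto|lia].
      + exists (p - 1)%nat. split; [lia|]. unfold h.
        destruct (Nat.ltb_spec (p-1) p0); [lia|].
        replace (S (p-1)) with p by lia. auto.
    - intros t t' q Ht Ht' R1 R2. apply (Hinj t t' (h q)); auto; lia. }
  lia.
Qed.




Lemma mulgV {G : group} (x : G) : mul x (inv x) = one.
Proof.
  transitivity (mul (mul (inv (inv x)) (inv x)) (mul x (inv x))).
  { rewrite mulVg, mul1g. reflexivity. }
  rewrite <- mulA. rewrite (mulA G (inv x) x). rewrite mulVg, mul1g. apply mulVg.
Qed.

Lemma mulg1 {G : group} (x : G) : mul x one = x.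
Proof. rewrite <- (mulVg G x), mulA, mulgV, mul1g. reflexivity. Qed.

Lemma invK {G : group} (x : G) : inv (inv x) = x.
Proof.
  rewrite <- (mulg1 (inv (inv x))). rewrite <- (mulVg G x).
  rewrite mulA, mulVg, mul1g. reflexivity.
Qed.

Lemma invM {G : group} (x y : G) : inv (mul x y) = mul (inv y) (inv x).
Proof.
  transitivity (mul (mul (inv (mul x y)) (mul x y)) (mul (inv y) (inv x))).
  - rewrite <- !mulA. rewrite (mulA G y (inv y)), mulgV, mul1g, mulgV, mulg1. reflexivity.
  - rewrite mulVg, mul1g. reflexivity.
Qed.

Lemma keyg {G : group} (g u v : G) : mul (inv (mul (inv g) u)) (mul (inv g) v) = mul (inv u) v.
Proof.
  rewrite invM, invK. rewrite <- mulA. rewrite (mulA G g (inv g)), mulgV, mul1g. reflexivity.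
Qed.

Lemma mul_inv_cancel {G : group} (x h : G) : mul x (mul (inv x) h) = h.
Proof. rewrite mulA, mulgV, mul1g. reflexivity. Qed.



Lemma ln_le (x y : R) : 0 < x -> x <= y -> ln x <= ln y.
Proof.
  intros Hx Hxy. destruct (Rle_lt_or_eq_dec x y Hxy) as [Hl|He].
  - left. apply ln_increasing; auto.
  - subst; right; reflexivity.
Qed.

Lemma index_le {G : group} (H L : G -> Prop) n m :
  is_subgroup L -> is_index H L n -> is_index H L m -> (n <= m)%nat.
Proof.
  intros [L1 [LM LV]] [f [fH [fd _]]] [g [_ [_ gc]]].
  apply (php n m (fun t p => L (mul (inv (g p)) (f t)))).
  - intros t Ht. destruct (gc (f t) (fH t Ht)) as [p [Hp Lp]]. eauto.
  - intros t t' p Ht Ht' R1 R2. apply fd; auto.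
    rewrite <- (keyg (g p)). apply LM; auto.
Qed.

Lemma index_eq {G : group} (H L : G -> Prop) n :
  is_subgroup L -> is_index H L n -> index H L = n.
Proof.
  intros HL Hn. unfold index.
  assert (Hs : is_index H L (epsilon (inhabits 0%nat) (fun n => is_index H L n))).
  { apply epsilon_spec. eauto. }
  pose proof (index_le _ _ _ _ HL Hn Hs). pose proof (index_le _ _ _ _ HL Hs Hn). lia.
Qed.

Lemma index_spec {G : group} (H L : G -> Prop) :
  finite_index H L -> is_index H L (index H L).
Proof. intros Hf. unfold index. apply epsilon_spec. exact Hf. Qed.

Lemma setI_sub {G : group} (H K : G -> Prop) :
  is_subgroup H -> is_subgroup K -> is_subgroup (setI H K).
Proof.
  intros [H1 [HM HV]] [K1 [KM KV]]. unfold setI. repeat split; firstorder.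
Qed.

Lemma setIC {G : group} (H K : G -> Prop) : setI H K = setI K H.
Proof.
  apply functional_extensionality; intro x. apply propositional_extensionality.
  unfold setI; tauto.
Qed.

Lemma index_pos {G : group} (H L : G -> Prop) n :
  is_subgroup H -> is_index H L n -> (1 <= n)%nat.
Proof.
  intros [H1 _] [f [_ [_ fc]]]. destruct (fc one H1) as [i [Hi _]]. lia.
Qed.

Lemma index_setI_tri {G : group} (H K L : G -> Prop) a b n :
  is_subgroup H -> is_subgroup K -> is_subgroup L ->
  is_index H (setI H K) a -> is_index K (setI K L) b ->
  is_index H (setI H L) n -> (n <= a * b)%nat.
Proof.
  intros SH SK SL [f [fH [_ fc]]] [g [_ [_ gc]]] [e [eH [ed _]]].
  apply (php n (a*b) (fun t p => exists i j, p = (i*b+j)%nat /\ (i < a)%nat /\ (j < b)%nat /\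
     setI H K (mul (inv (f i)) (e t)) /\ setI K L (mul (inv (g j)) (mul (inv (f i)) (e t))))).
  - intros t Ht. destruct (fc (e t) (eH t Ht)) as [i [Hi Ii]].
    destruct (gc _ (proj2 Ii)) as [j [Hj Ij]].
    exists (i*b+j)%nat. split; [nia|]. exists i, j. auto.
  - intros t t' p Ht Ht' [i [j [Ep [Hi [Hj [I1 J1]]]]]] [i' [j' [Ep' [Hi' [Hj' [I1' J1']]]]]].
    assert (i = i' /\ j = j') as [<- <-].
    { subst p. destruct (Nat.lt_trichotomy i i') as [C|[C|C]]; [nia| |nia]. subst; lia. }
    apply ed; auto. split.
    + destruct SH as [_ [HM HV]]. apply HM; [apply HV|]; auto.
    + rewrite <- (keyg (f i)). rewrite <- (keyg (g j)).
      destruct SL as [_ [LM LV]]. apply LM; [apply LV|]; [apply J1|apply J1'].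
Qed.

Lemma index1_sub {G : group} (H K : G -> Prop) :
  is_subgroup H -> is_subgroup K -> is_index H (setI H K) 1 -> forall h, H h -> K h.
Proof.
  intros [H1 _] [K1 [KM KV]] [f [fH [_ fc]]] h Hh.
  destruct (fc one H1) as [i [Hi [_ Ki]]]. destruct (fc h Hh) as [i' [Hi' [_ Ki']]].
  assert (i = 0%nat) by lia. assert (i' = 0%nat) by lia. subst.
  rewrite mulg1 in Ki. rewrite <- (mul_inv_cancel (f 0%nat) h).
  apply KM; auto. rewrite <- (invK (f 0%nat)). apply KV; auto.
Qed.

Lemma index_self {G : group} (H : G -> Prop) :
  is_subgroup H -> is_index H (setI H H) 1.
Proof.
  intros [H1 _]. exists (fun _ => one). split; [auto|split; [intros; lia|]].
  intros h Hh. exists 0%nat. split; [lia|].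
  assert (E : inv (@one G) = one) by (rewrite <- (mulg1 (inv one)); apply mulVg).
  rewrite E, mul1g. split; auto.
Qed.

Lemma c_spec {G : group} (H K : G -> Prop) :
  is_subgroup H -> is_subgroup K -> commensurable H K ->
  is_index H (setI H K) (index H (setI H K)) /\ is_index K (setI K H) (index K (setI K H))
  /\ c H K = (index H (setI H K) * index K (setI K H))%nat.
Proof.
  intros SH SK [A B]. unfold c. rewrite (setIC K H).
  split; [apply index_spec; auto|]. split; [apply index_spec; auto|reflexivity].
Qed.

Theorem corollary7 (G : group) (F : (G -> Prop) -> Prop)
  (HF : forall H, F H -> is_subgroup H)
  (Hcomm : forall H K, F H -> F K -> commensurable H K) :
  metric_on F (@d G).
Proof.
  assert (Cpos : forall H K, F H -> F K -> (1 <= c H K)%nat).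
  { intros H K FH FK. destruct (c_spec H K (HF H FH) (HF K FK) (Hcomm H K FH FK)) as [I1 [I2 E]].
    rewrite E. pose proof (index_pos _ _ _ (HF H FH) I1). pose proof (index_pos _ _ _ (HF K FK) I2). nia. }
  assert (Rpos : forall H K, F H -> F K -> 0 < INR (c H K)).
  { intros H K FH FK. apply lt_0_INR. specialize (Cpos H K FH FK). lia. }
  split; [|split; [|split]].
  - intros H K FH FK. unfold d. rewrite <- ln_1. apply ln_le; [lra|].
    change 1 with (INR 1). apply le_INR. auto.
  - intros H K FH FK. unfold d. split.
    + intro E. rewrite <- ln_1 in E. apply ln_inv in E; [|auto|lra].
      change 1 with (INR 1) in E. apply INR_eq in E.
      destruct (c_spec H K (HF H FH) (HF K FK) (Hcomm H K FH FK)) as [I1 [I2 E2]].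
      rewrite E2 in E.
      pose proof (index_pos _ _ _ (HF H FH) I1). pose proof (index_pos _ _ _ (HF K FK) I2).
      assert (index H (setI H K) = 1%nat) as A1 by nia.
      assert (index K (setI K H) = 1%nat) as A2 by nia.
      rewrite A1 in I1. rewrite A2 in I2.
      apply functional_extensionality; intro x. apply propositional_extensionality. split.
      * apply (index1_sub H K (HF H FH) (HF K FK) I1).
      * apply (index1_sub K H (HF K FK) (HF H FH) I2).
    + intros <-. unfold c. rewrite (index_eq _ _ 1 (setI_sub _ _ (HF H FH) (HF H FH)) (index_self H (HF H FH))).
      simpl. apply ln_1.
  - intros H K FH FK. unfold d, c. rewrite (setIC K H). rewrite Nat.mul_comm. reflexivity.
  - intros H K L FH FK FL.
    destruct (c_spec H K (HF H FH) (HF K FK) (Hcomm H K FH FK)) as [A1 [A2 EA]].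
    destruct (c_spec K L (HF K FK) (HF L FL) (Hcomm K L FK FL)) as [B1 [B2 EB]].
    destruct (c_spec H L (HF H FH) (HF L FL) (Hcomm H L FH FL)) as [C1 [C2 EC]].
    pose proof (index_setI_tri H K L _ _ _ (HF H FH) (HF K FK) (HF L FL) A1 B1 C1) as T1.
    pose proof (index_setI_tri L K H _ _ _ (HF L FL) (HF K FK) (HF H FH) B2 A2 C2) as T2.
    assert (Hle : (c H L <= c H K * c K L)%nat).
    { rewrite EA, EB, EC. eapply Nat.le_trans; [apply Nat.mul_le_mono; [exact T1|exact T2]|].
      apply Nat.eq_le_incl. ring. }
    unfold d. rewrite <- ln_mult by auto. apply ln_le; [auto|].
    rewrite <- mult_INR. apply le_INR. exact Hle.
Qed.
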